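(* For every integer $a\geq 1$, $$\sum_{n\geq 1}\frac{H_n}{(2n+1)^{2a}}=-2\lambda(2a)\ln 2+2a\,\lambda(2a+1)-2\sum_{j=1}^{a-1}\lambda(2j)\lambda(2a+1-2j),$$ where an empty sum equals $0$.
   Context: $H_n=1+\frac12+\cdots+\frac1n$ is the $n$-th harmonic number. For real $s>1$, $\lambda(s)=\sum_{n\geq 1}\frac{1}{(2n-1)^s}=(1-2^{-s})\zeta(s)$. *)

(* Defs.v *)
From Stdlib Require Import Reals.
From Coquelicot Require Import Coquelicot.
Open Scope R_scope.

Fixpoint harmonic (n : nat) : R :=
  match n with
  | O => 0
  | S m => harmonic m + / INR (S m)
  end.

(* lambda(s) = sum_{n>=1} 1/(2n-1)^s, here for integer s (s >= 2 used);
   index shifted: n = k+1, 2n-1 = 2k+1. *)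
Definition dirichlet_lambda (s : nat) : R :=
  Series (fun k : nat => / (2 * INR k + 1) ^ s).

(* Main.v *)
Require Import Defs.
From Stdlib Require Import Reals Lra Lia.
From Coquelicot Require Import Coquelicot.
Open Scope R_scope.


Fixpoint psum (f : nat -> R) (n : nat) : R :=
  match n with O => 0 | S m => psum f m + f m end.

Definition u (n : nat) : R := 2 * INR n + 1.
Definition P (q n : nat) : R := psum (fun i => / u i ^ q) n.

Lemma u_pos n : 0 < u n.
Proof. unfold u; pose proof (pos_INR n); lra. Qed.
Lemma u_ge1 n : 1 <= u n.
Proof. unfold u; pose proof (pos_INR n); lra. Qed.

Lemma psum_ext f g n : (forall i, (i < n)%nat -> f i = g i) -> psum f n = psum g n.
Proof. induction n; simpl; intros H; auto. rewrite IHn by (intros; apply H; lia). rewrite H by lia; auto. Qed.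

Lemma psum_plus f g n : psum (fun i => f i + g i) n = psum f n + psum g n.
Proof. induction n; simpl; [lra|rewrite IHn; lra]. Qed.
Lemma psum_minus f g n : psum (fun i => f i - g i) n = psum f n - psum g n.
Proof. induction n; simpl; [lra|rewrite IHn; lra]. Qed.
Lemma psum_scal c f n : psum (fun i => c * f i) n = c * psum f n.
Proof. induction n; simpl; [lra|rewrite IHn; lra]. Qed.
Lemma psum_const c n : psum (fun _ => c) n = INR n * c.
Proof. induction n; simpl psum; [simpl; lra|rewrite IHn, S_INR; lra]. Qed.
Lemma psum_shift f n : psum f (S n) = f O + psum (fun i => f (S i)) n.
Proof. induction n; simpl in *; [lra|rewrite IHn; lra]. Qed.
Lemma psum_le f g n : (forall i, (i < n)%nat -> f i <= g i) -> psum f n <= psum g n.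
Proof. induction n; simpl; intros H; [lra|]. pose proof (H n ltac:(lia)). pose proof (IHn ltac:(intros; apply H; lia)). lra. Qed.
Lemma psum_nonneg f n : (forall i, (i < n)%nat -> 0 <= f i) -> 0 <= psum f n.
Proof. intros H. replace 0 with (psum (fun _ => 0) n). apply psum_le; auto. rewrite psum_const; lra. Qed.
Lemma psum_swap (f : nat -> nat -> R) n m :
  psum (fun i => psum (fun j => f i j) m) n = psum (fun j => psum (fun i => f i j) n) m.
Proof. induction n; simpl. rewrite psum_const; lra. rewrite IHn, psum_plus. auto. Qed.
Lemma psum_rev f n : psum f n = psum (fun i => f (n - 1 - i)%nat) n.
Proof.
  revert f; induction n; intros f. auto.
  transitivity (psum f n + f n). reflexivity.
  rewrite (psum_shift (fun i => f (S n - 1 - i)%nat)). rewrite IHn.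
  replace (S n - 1 - 0)%nat with n by lia. rewrite Rplus_comm. f_equal.
  apply psum_ext; intros; f_equal; lia.
Qed.
Lemma psum_split2 f k : psum f (2 * k) = psum (fun j => f (2 * j)%nat + f (2 * j + 1)%nat) k.
Proof.
  induction k. auto. replace (2 * S k)%nat with (S (S (2 * k))) by lia. cbn [psum]. rewrite IHk.
  replace (S (2*k)) with (2 * k + 1)%nat by lia. lra.
Qed.
Lemma psum_pair f k : psum f (2 * k) = psum (fun j => f (2 * j)%nat + f (2 * k - 1 - 2 * j)%nat) k.
Proof.
  rewrite psum_split2, !psum_plus. f_equal. rewrite psum_rev. apply psum_ext; intros; f_equal; lia.
Qed.

Lemma harmonic_psum n : harmonic n = psum (fun i => / INR (S i)) n.
Proof. induction n; simpl psum; simpl harmonic; auto. rewrite IHn; auto. Qed.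

Lemma harmonic_rev n : psum (fun i => / INR (n - i)) n = harmonic n.
Proof.
  induction n. auto. rewrite psum_shift. replace (S n - 0)%nat with (S n) by lia. simpl harmonic.
  rewrite <- IHn. rewrite Rplus_comm. f_equal.
Qed.

Lemma prod_id p q N : P p N * P q N =
  psum (fun n => P q n / u n ^ p + P p n / u n ^ q + / u n ^ (p + q)) N.
Proof.
  induction N. unfold P; simpl; lra. unfold P in *. simpl psum. rewrite <- IHN.
  rewrite pow_add, Rinv_mult. unfold Rdiv. ring.
Qed.

Lemma Fdec r x y : x <> 0 -> y <> 0 -> y - x <> 0 ->
  / ((y - x) * y ^ (S r)) = / x ^ (S r) * (/ (y - x) - / y)
     - psum (fun m => / (x ^ (S m) * y ^ (S r - m))) r.
Proof.
  intros hx hy hxy. induction r.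
  - simpl. field. auto.
  - transitivity (/ ((y - x) * y ^ S r) / y).
    { simpl. field. repeat split; auto; apply pow_nonzero; auto. }
    rewrite IHr. cbn [psum].
    replace (S (S r) - r)%nat with 2%nat by lia.
    unfold Rdiv; rewrite Rmult_minus_distr_r.
    assert (E: psum (fun m => / (x ^ S m * y ^ (S r - m))) r / y
        = psum (fun m => / (x ^ S m * y ^ (S (S r) - m))) r).
    { unfold Rdiv. rewrite Rmult_comm, <- psum_scal. apply psum_ext; intros m hm.
      replace (S (S r) - m)%nat with (S (S r - m)) by lia. rewrite <- !tech_pow_Rmult. field.
      repeat split; try apply pow_nonzero; auto. }
    unfold Rdiv in E. rewrite E. rewrite <- !tech_pow_Rmult. simpl pow. field. repeat split; auto; apply pow_nonzero; auto.
Qed.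

Lemma u_diff n i : (i <= n)%nat -> u n - u i = 2 * INR (n - i).
Proof. intros; unfold u; rewrite minus_INR; auto; lra. Qed.

Lemma term_id r n :
  harmonic n / u n ^ (S r) =
  2 * psum (fun i => / u i ^ (S r) * (/ (u n - u i) - / u n)) n
  - 2 * psum (fun m => P (S m) n / u n ^ (S r - m)) r.
Proof.
  rewrite <- harmonic_rev. unfold Rdiv. rewrite Rmult_comm, <- psum_scal.
  transitivity (psum (fun i => 2 * / ((u n - u i) * u n ^ S r)) n).
  { apply psum_ext; intros i hi. rewrite u_diff by lia.
    assert (0 < INR (n - i)) by (apply lt_0_INR; lia).
    pose proof (u_pos n). field. split; [apply pow_nonzero|]; lra. }
  transitivity (psum (fun i => 2 * (/ u i ^ (S r) * (/ (u n - u i) - / u n))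
      - 2 * psum (fun m => / (u i ^ (S m) * u n ^ (S r - m))) r) n).
  { apply psum_ext; intros i hi. rewrite Fdec. ring.
    pose proof (u_pos i); lra. pose proof (u_pos n); lra.
    rewrite u_diff by lia. assert (0 < INR (n - i)) by (apply lt_0_INR; lia). lra. }
  rewrite psum_minus, !psum_scal. f_equal. f_equal.
  rewrite psum_swap. apply psum_ext; intros m hm. unfold P.
  rewrite Rmult_comm, <- psum_scal. apply psum_ext; intros i hi.
  rewrite Rinv_mult. ring.
Qed.

Lemma P1S N : P 1 (S N) = P 1 N + / u N.
Proof. unfold P; simpl; rewrite Rmult_1_r; auto. Qed.
Lemma PS q N : P q (S N) = P q N + / u N ^ q.
Proof. reflexivity. Qed.

Lemma Bsum (c : nat -> R) N :
  psum (fun n => psum (fun i => c i * (/ (u n - u i) - / u n)) n) N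
  = psum (fun i => c i * (harmonic (N - 1 - i) / 2 - P 1 N + P 1 (S i))) N.
Proof.
  induction N. reflexivity.
  cbn [psum]. rewrite IHN.
  replace (S N - 1 - N)%nat with O by lia. simpl harmonic.
  rewrite <- psum_plus. rewrite P1S.
  assert (psum (fun i => c i * (harmonic (N - 1 - i) / 2 - P 1 N + P 1 (S i)) +
      c i * (/ (u N - u i) - / u N)) N =
    psum (fun i => c i * (harmonic (S N - 1 - i) / 2 - (P 1 N + / u N) + P 1 (S i))) N).
  { apply psum_ext; intros i hi. replace (S N - 1 - i)%nat with (S (N - 1 - i)) by lia.
    cbn [harmonic]. rewrite u_diff by lia. replace (S (N - 1 - i)) with (N - i)%nat by lia.
    assert (0 < INR (N - i)) by (apply lt_0_INR; lia). pose proof (u_pos N). field. lra. }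
  rewrite H. replace (c N * _) with 0 by (unfold Rdiv; ring). rewrite Rplus_0_r. apply psum_ext; intros; repeat f_equal; lia.
Qed.

Definition E (a N : nat) : R :=
  psum (fun i => / u i ^ (2 * a) * (harmonic (N - 1 - i) / 2 - P 1 N)) N.

Lemma Sfull_id a N : (1 <= a)%nat ->
  psum (fun n => harmonic n / u n ^ (2 * a)) N =
  2 * P (2 * a + 1) N + 2 * E a N
  - 2 * psum (fun j => P (2 * a - 1 - 2 * j) N * P (2 * j + 2) N - P (2 * a + 1) N) (a - 1).
Proof.
  intros ha. set (r := (2 * a - 1)%nat).
  assert (hr : (2 * a)%nat = S r) by (unfold r; lia).
  rewrite hr.
  rewrite (psum_ext _ _ _ (fun n _ => term_id r n)).
  rewrite psum_minus, !psum_scal, psum_swap.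
  rewrite Bsum.
  replace r with (S (2 * (a - 1))) by (unfold r; lia).
  rewrite psum_shift. rewrite psum_pair.
  assert (H1 : psum (fun i => / u i ^ S (S (2 * (a - 1))) *
      (harmonic (N - 1 - i) / 2 - P 1 N + P 1 (S i))) N
      - psum (fun n => P 1 n / u n ^ (S (S (2 * (a - 1))) - 0)) N
      = E a N + P (S (S (2 * (a - 1))) + 1) N).
  { unfold E. rewrite hr. replace (S r) with (S (S (2 * (a - 1)))) by (unfold r; lia).
    rewrite <- psum_minus.
    change (P (S (S (2 * (a - 1))) + 1) N) with (psum (fun i => / u i ^ (S (S (2 * (a - 1))) + 1)) N).
    rewrite <- psum_plus. apply psum_ext; intros i hi. fold (P 1 i).
    rewrite P1S. replace (S (S (2 * (a - 1))) - 0)%nat with (S (S (2 * (a - 1)))) by lia.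
    replace (S (S (2 * (a - 1))) + 1)%nat with (S (S (S (2 * (a - 1))))) by lia.
    rewrite <- (tech_pow_Rmult (u i) (S (S (2 * (a - 1))))). pose proof (u_pos i).
    field. split; [apply pow_nonzero|]; lra. }
  assert (H2 : psum
     (fun j : nat =>
      psum
        (fun i : nat =>
         P (S (S (2 * j))) i / u i ^ (S (S (2 * (a - 1))) - S (2 * j)))
        N +
      psum
        (fun i : nat =>
         P (S (S (2 * (a - 1) - 1 - 2 * j))) i /
         u i ^ (S (S (2 * (a - 1))) - S (2 * (a - 1) - 1 - 2 * j)))
        N)
     (a - 1) = psum
    (fun j : nat =>
     P (S (2 * (a - 1)) - 2 * j) N * P (2 * j + 2) N -
     P (S (S (2 * (a - 1))) + 1) N)
    (a - 1)).
  { apply psum_ext; intros j hj. rewrite (prod_id (S (2 * (a - 1)) - 2 * j) (2 * j + 2)).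
    replace (S (2 * (a - 1)) - 2 * j + (2 * j + 2))%nat with (S (S (2 * (a - 1))) + 1)%nat by lia.
    change (P (S (S (2 * (a - 1))) + 1) N) with (psum (fun i => / u i ^ (S (S (2 * (a - 1))) + 1)) N).
    rewrite <- !psum_plus, <- psum_minus.
    apply psum_ext; intros n hn.
    replace (S (S (2 * j))) with (2 * j + 2)%nat by lia.
    replace (S (S (2 * (a - 1))) - S (2 * j))%nat with (S (2 * (a - 1)) - 2 * j)%nat by lia.
    replace (S (S (2 * (a - 1) - 1 - 2 * j))) with (S (2 * (a - 1)) - 2 * j)%nat by lia.
    replace (S (S (2 * (a - 1))) - S (2 * (a - 1) - 1 - 2 * j))%nat with (2 * j + 2)%nat by lia.
    ring. }
  rewrite H2. lra.
Qed.

Lemma ln1p_le x : -1 < x -> ln (1 + x) <= x.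
Proof.
  intros hx. rewrite <- (ln_exp x) at 2. apply ln_le. lra. apply exp_ineq1_le.
Qed.

Lemma ln_step_up k : (1 <= k)%nat -> ln (INR (S k)) - ln (INR k) <= / INR k.
Proof.
  intros hk. assert (0 < INR k) by (apply lt_0_INR; lia).
  rewrite <- ln_div by (try rewrite S_INR; lra).
  replace (INR (S k) / INR k) with (1 + / INR k) by (rewrite S_INR; field; lra).
  apply ln1p_le. assert (0 < / INR k) by (apply Rinv_0_lt_compat; lra). lra.
Qed.

Lemma ln_step_low k : (1 <= k)%nat -> / INR (S k) <= ln (INR (S k)) - ln (INR k).
Proof.
  intros hk. assert (0 < INR k) by (apply lt_0_INR; lia). rewrite S_INR.
  assert (ln (INR k) - ln (INR k + 1) <= - / (INR k + 1)).
  { rewrite <- ln_div by lra.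
    replace (INR k / (INR k + 1)) with (1 + - / (INR k + 1)) by (field; lra).
    apply ln1p_le. assert (/ (INR k + 1) < 1). { rewrite <- Rinv_1. apply Rinv_lt_contravar; lra. }
    lra. }
  lra.
Qed.

Lemma Hlow m d : ln (INR (m + d + 1)) - ln (INR (m + 1)) <= harmonic (m + d) - harmonic m.
Proof.
  induction d.
  - replace (m + 0)%nat with m by lia. lra.
  - replace (m + S d)%nat with (S (m + d)) by lia. cbn [harmonic].
    pose proof (ln_step_up (m + d + 1) ltac:(lia)).
    replace (S (m + d + 1)) with (S (m + d) + 1)%nat in H by lia.
    replace (m + d + 1)%nat with (S (m + d)) in * by lia. lra.
Qed.

Lemma Hup m d : (1 <= m)%nat -> harmonic (m + d) - harmonic m <= ln (INR (m + d)) - ln (INR m).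
Proof.
  intros hm. induction d.
  - replace (m + 0)%nat with m by lia. lra.
  - replace (m + S d)%nat with (S (m + d)) by lia. cbn [harmonic].
    pose proof (ln_step_up (m + d) ltac:(lia)).
    pose proof (ln_step_low (m + d) ltac:(lia)). lra.
Qed.

Lemma harm_ln2 M : 0 <= harmonic (2 * M + 1) - harmonic M - ln 2 <= / INR (S M).
Proof.
  split.
  - pose proof (Hlow M (M + 1)).
    replace (M + (M + 1) + 1)%nat with (2 * (M + 1))%nat in H by lia.
    replace (M + (M + 1))%nat with (2 * M + 1)%nat in H by lia.
    rewrite mult_INR in H. rewrite ln_mult in H by (simpl; try apply lt_0_INR; lia || lra).
    replace (INR 2) with 2 in H by (simpl; lra). lra.
  - pose proof (Hup (M + 1) M ltac:(lia)).
    replace (M + 1 + M)%nat with (2 * M + 1)%nat in H by lia.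
    assert (ln (INR (2 * M + 1)) <= ln (INR (2 * (M + 1)))).
    { apply ln_le. apply lt_0_INR; lia. apply le_INR; lia. }
    rewrite mult_INR in H0. rewrite ln_mult in H0 by (simpl; try apply lt_0_INR; lia || lra).
    replace (INR 2) with 2 in H0 by (simpl; lra).
    replace (M + 1)%nat with (S M) in * by lia. cbn [harmonic] in H. lra.
Qed.

Lemma P1_H M : P 1 (S M) = harmonic (2 * M + 1) - harmonic M / 2.
Proof.
  induction M.
  - unfold P, u; simpl. field.
  - rewrite P1S, IHM. replace (2 * S M + 1)%nat with (S (S (2 * M + 1))) by lia.
    cbn [harmonic]. unfold u. rewrite !S_INR, plus_INR, mult_INR. simpl INR.
    pose proof (pos_INR M). field. lra.
Qed.

Lemma Ptail M i : 0 <= P 1 (M + 1 + i) - P 1 (M + 1) <= INR i / u (M + 1).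
Proof.
  induction i.
  - replace (M + 1 + 0)%nat with (M + 1)%nat by lia. simpl. lra.
  - replace (M + 1 + S i)%nat with (S (M + 1 + i)) by lia. rewrite P1S.
    assert (0 < / u (M + 1 + i)) by (apply Rinv_0_lt_compat, u_pos).
    assert (/ u (M + 1 + i) <= / u (M + 1)).
    { apply Rinv_le_contravar. apply u_pos. unfold u. rewrite !plus_INR. pose proof (pos_INR i). lra. }
    rewrite S_INR. unfold Rdiv in *. lra.
Qed.

Lemma Eterm i N : (i < N)%nat ->
  Rabs (harmonic (N - 1 - i) / 2 - P 1 N + ln 2) <= (1 + INR i) / INR (N - i).
Proof.
  intros hi. set (M := (N - 1 - i)%nat).
  assert (hN : N = (M + 1 + i)%nat) by (unfold M; lia).
  assert (hNi : (N - i)%nat = S M) by (unfold M; lia).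
  rewrite hNi. rewrite hN at 1.
  pose proof (P1_H M) as h1. replace (S M) with (M + 1)%nat in h1 by lia.
  pose proof (harm_ln2 M) as h2. pose proof (Ptail M i) as h3.
  assert (hu : INR (S M) <= u (M + 1)).
  { unfold u. rewrite S_INR, plus_INR. simpl INR. pose proof (pos_INR M). lra. }
  assert (hpos : 0 < INR (S M)) by (apply lt_0_INR; lia).
  assert (INR i / u (M + 1) <= INR i / INR (S M)).
  { unfold Rdiv. apply Rmult_le_compat_l. apply pos_INR. apply Rinv_le_contravar; lra. }
  assert (E1 : (1 + INR i) / INR (S M) = / INR (S M) + INR i / INR (S M)) by (field; lra).
  rewrite E1. apply Rabs_le. lra.
Qed.

Lemma psum_abs f n : Rabs (psum f n) <= psum (fun i => Rabs (f i)) n.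
Proof.
  induction n; simpl. rewrite Rabs_R0; lra.
  eapply Rle_trans. apply Rabs_triang. lra.
Qed.

Lemma Ebound a N : (1 <= a)%nat ->
  Rabs (E a N + ln 2 * P (2 * a) N) <= 3 * harmonic N / (2 * INR N + 1).
Proof.
  intros ha. unfold E. change (P (2 * a) N) with (psum (fun i => / u i ^ (2 * a)) N). rewrite <- psum_scal, <- psum_plus.
  eapply Rle_trans. apply psum_abs.
  assert (hN : 0 < 2 * INR N + 1) by (pose proof (pos_INR N); lra).
  transitivity (psum (fun i => (2 * / u i + / INR (N - i)) / (2 * INR N + 1)) N).
  { apply psum_le; intros i hi. cbv beta.
    replace (/ u i ^ (2 * a) * (harmonic (N - 1 - i) / 2 - P 1 N) + ln 2 * / u i ^ (2 * a))
      with (/ u i ^ (2 * a) * (harmonic (N - 1 - i) / 2 - P 1 N + ln 2)) by ring.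
    rewrite Rabs_mult. pose proof (Eterm i N hi).
    pose proof (u_pos i) as hu. pose proof (u_ge1 i).
    assert (c1 : 0 < / u i ^ (2 * a)) by (apply Rinv_0_lt_compat, pow_lt; lra).
    rewrite Rabs_pos_eq by lra.
    assert (c2 : / u i ^ (2 * a) <= / u i ^ 2).
    { apply Rinv_le_contravar. apply pow_lt; lra. apply Rle_pow; auto; lia. }
    assert (hNi : 0 < INR (N - i)) by (apply lt_0_INR; lia).
    assert (hiu : 1 + INR i <= u i) by (unfold u; pose proof (pos_INR i); lra).
    assert (hsum : 2 * INR (N - i) + u i = 2 * INR N + 1) by (rewrite minus_INR by lia; unfold u; lra).
    apply Rle_trans with (/ u i ^ 2 * ((1 + INR i) / INR (N - i))).
    { apply Rmult_le_compat; try lra. apply Rabs_pos. }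
    apply Rle_trans with (/ (u i * INR (N - i))).
    { simpl pow. rewrite Rmult_1_r. apply Rmult_le_reg_r with (u i * u i * INR (N - i)).
      apply Rmult_lt_0_compat; [apply Rmult_lt_0_compat|]; lra.
      field_simplify; try lra. }
    right. rewrite <- hsum. field. lra. }
  rewrite (psum_ext _ (fun i => / (2 * INR N + 1) * (2 * / u i + / INR (N - i))))
    by (intros; unfold Rdiv; ring).
  rewrite psum_scal, psum_plus, psum_scal, harmonic_rev.
  unfold Rdiv. rewrite (Rmult_comm (3 * harmonic N)). apply Rmult_le_compat_l.
  left; apply Rinv_0_lt_compat; lra.
  assert (psum (fun i => / u i) N <= harmonic N).
  { rewrite harmonic_psum. apply psum_le; intros i hi. apply Rinv_le_contravar.
    apply lt_0_INR; lia. unfold u. rewrite S_INR. pose proof (pos_INR i). lra. }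
  assert (0 <= psum (fun i => / u i) N).
  { apply psum_nonneg; intros. left; apply Rinv_0_lt_compat, u_pos. }
  lra.
Qed.

Lemma sum_n_psum a N : sum_n a N = psum a (S N).
Proof.
  induction N. rewrite sum_O. simpl; lra.
  rewrite sum_Sn, IHN. reflexivity.
Qed.

Lemma series_of_lim a (l : R) : is_lim_seq (psum a) l -> is_series a l.
Proof.
  intros H. apply is_lim_seq_incr_1 in H.
  assert (H' : is_lim_seq (sum_n a) l).
  { apply is_lim_seq_ext with (fun n => psum a (S n)); auto. intros; symmetry; apply sum_n_psum. }
  exact H'.
Qed.

Lemma P2_bound N : P 2 N <= 2.
Proof.
  assert (forall N, P 2 (S N) <= 2 - / (2 * INR N + 3)).
  { induction N0.
    - unfold P, u; simpl. rewrite Rmult_0_r, Rplus_0_l, Rplus_0_l, !Rmult_1_r, Rinv_1.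
      assert (0 < /3) by (apply Rinv_0_lt_compat; lra).
      assert (/3 < 1) by (rewrite <- Rinv_1; apply Rinv_lt_contravar; lra). lra.
    - rewrite PS. unfold u. rewrite S_INR.
      pose proof (pos_INR N0).
      assert (/ (2 * (INR N0 + 1) + 1) ^ 2 <= / (2 * INR N0 + 3) - / (2 * (INR N0 + 1) + 3)).
      { replace (2 * (INR N0 + 1) + 1) with (2 * INR N0 + 3) by lra.
        replace (/ (2 * INR N0 + 3) - / (2 * (INR N0 + 1) + 3)) with
           (2 / ((2 * INR N0 + 3) * (2 * INR N0 + 5))) by (field; lra).
        simpl pow. rewrite Rmult_1_r. apply Rmult_le_reg_r with ((2 * INR N0 + 3) * (2 * INR N0 + 3) * (2 * INR N0 + 5)).
        apply Rmult_lt_0_compat; [apply Rmult_lt_0_compat|]; lra.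
        field_simplify; lra. }
      lra. }
  destruct N. unfold P; simpl; lra.
  pose proof (H N). assert (0 < / (2 * INR N + 3)) by (apply Rinv_0_lt_compat; pose proof (pos_INR N); lra). lra.
Qed.

Lemma lam_lim s : (2 <= s)%nat -> is_lim_seq (P s) (dirichlet_lambda s).
Proof.
  intros hs.
  assert (hex : ex_finite_lim_seq (P s)).
  { apply ex_finite_lim_seq_incr with 2.
    - intros n. rewrite PS. assert (0 < / u n ^ s) by (apply Rinv_0_lt_compat, pow_lt, u_pos). lra.
    - intros n. eapply Rle_trans; [|apply P2_bound]. apply psum_le; intros i hi.
      pose proof (u_ge1 i). apply Rinv_le_contravar. apply pow_lt; lra. apply Rle_pow; auto. }
  destruct hex as [l hl].
  assert (dirichlet_lambda s = l).
  { unfold dirichlet_lambda. apply is_series_unique. apply series_of_lim. exact hl. }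
  rewrite H; auto.
Qed.

Lemma harm_nonneg n : 0 <= harmonic n.
Proof. rewrite harmonic_psum. apply psum_nonneg; intros; left; apply Rinv_0_lt_compat, lt_0_INR; lia. Qed.

Lemma INRS_lim : is_lim_seq (fun n => INR (S n)) p_infty.
Proof. apply (is_lim_seq_incr_1 INR). apply is_lim_seq_INR. Qed.

Lemma H_over : is_lim_seq (fun N => harmonic N / (2 * INR N + 1)) 0.
Proof.
  apply is_lim_seq_incr_1.
  apply is_lim_seq_le_le with (fun _ => 0) (fun n => / INR (S n) + ln (INR (S n)) / INR (S n)).
  - intros n. pose proof (harm_nonneg (S n)).
    assert (hx : 1 <= INR (S n)) by (rewrite S_INR; pose proof (pos_INR n); lra).
    assert (hH : harmonic (S n) <= 1 + ln (INR (S n))).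
    { pose proof (Hup 1 n ltac:(lia)). replace (1 + n)%nat with (S n) in H0 by lia.
      simpl INR in H0 at 2. rewrite ln_1 in H0. simpl harmonic in H0 at 2. lra. }
    split.
    + apply Rdiv_le_0_compat; auto. lra.
    + apply Rle_trans with (harmonic (S n) / INR (S n)).
      { unfold Rdiv. apply Rmult_le_compat_l; auto. apply Rinv_le_contravar; lra. }
      replace (/ INR (S n) + ln (INR (S n)) / INR (S n)) with ((1 + ln (INR (S n))) / INR (S n)) by (field; lra).
      unfold Rdiv. apply Rmult_le_compat_r; auto. left; apply Rinv_0_lt_compat; lra.
  - apply is_lim_seq_const.
  - replace 0 with (0 + 0) by lra. apply is_lim_seq_plus'.
    + pose proof (is_lim_seq_inv _ _ INRS_lim ltac:(discriminate)). exact H.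
    + apply (is_lim_comp_seq (fun y => ln y / y) (fun n => INR (S n)) p_infty 0).
      apply is_lim_div_ln_p. exists O; intros; discriminate. apply INRS_lim.
Qed.

Lemma E_lim a : (1 <= a)%nat -> is_lim_seq (E a) (- ln 2 * dirichlet_lambda (2 * a)).
Proof.
  intros ha.
  apply is_lim_seq_ext with (fun N => (E a N + ln 2 * P (2 * a) N) + (- ln 2) * P (2 * a) N).
  { intros; ring. }
  replace (- ln 2 * dirichlet_lambda (2 * a)) with (0 + - ln 2 * dirichlet_lambda (2 * a)) by ring.
  apply is_lim_seq_plus'.
  - apply is_lim_seq_abs_0.
    apply is_lim_seq_le_le with (fun _ => 0) (fun N => 3 * (harmonic N / (2 * INR N + 1))).
    + intros N. split. apply Rabs_pos. eapply Rle_trans. apply Ebound; auto. right; unfold Rdiv; ring.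
    + apply is_lim_seq_const.
    + replace (Finite 0) with (Rbar_mult 3 0) by (simpl; f_equal; ring).
      apply is_lim_seq_scal_l. apply H_over.
  - apply is_lim_seq_mult'. apply is_lim_seq_const. apply lam_lim. lia.
Qed.

Lemma psum_lim (F : nat -> nat -> R) (L : nat -> R) k :
  (forall j, (j < k)%nat -> is_lim_seq (fun N => F j N) (L j)) ->
  is_lim_seq (fun N => psum (fun j => F j N) k) (psum L k).
Proof.
  induction k; intros H; simpl.
  - apply is_lim_seq_const.
  - apply is_lim_seq_plus'. apply IHk; intros; apply H; lia. apply H; lia.
Qed.

Theorem mainTheorem2 (a : nat) (ha : (1 <= a)%nat) :
  is_series (fun k : nat => harmonic (S k) / (2 * INR (S k) + 1) ^ (2 * a))
    (- 2 * dirichlet_lambda (2 * a) * ln 2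
     + 2 * INR a * dirichlet_lambda (2 * a + 1)
     - 2 * sum_n (fun j : nat =>
                    if (1 <=? j)%nat
                    then dirichlet_lambda (2 * j) * dirichlet_lambda (2 * a + 1 - 2 * j)
                    else 0) (a - 1)).
Proof.
  set (lam := dirichlet_lambda).
  assert (Hsum : sum_n (fun j : nat =>
                    if (1 <=? j)%nat
                    then lam (2 * j)%nat * lam (2 * a + 1 - 2 * j)%nat
                    else 0) (a - 1)
     = psum (fun j => lam (2 * a - 1 - 2 * j)%nat * lam (2 * j + 2)%nat) (a - 1)).
  { rewrite sum_n_psum. replace (S (a - 1)) with (S (a - 1)) by lia.
    rewrite psum_shift. simpl (1 <=? 0)%nat. rewrite Rplus_0_l.
    apply psum_ext; intros j hj. simpl (1 <=? S j)%nat.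
    replace (2 * S j)%nat with (2 * j + 2)%nat by lia.
    replace (2 * a + 1 - (2 * j + 2))%nat with (2 * a - 1 - 2 * j)%nat by lia. ring. }
  fold lam. rewrite Hsum.
  apply series_of_lim.
  set (f := fun n => harmonic n / u n ^ (2 * a)).
  apply is_lim_seq_ext with (fun N => psum f (S N)).
  { intros N. rewrite psum_shift. unfold f at 1. simpl harmonic. unfold Rdiv; rewrite Rmult_0_l, Rplus_0_l.
    apply psum_ext; intros; reflexivity. }
  apply (is_lim_seq_incr_1 (psum f)).
  apply is_lim_seq_ext with (fun N => 2 * P (2 * a + 1) N + 2 * E a N
     - 2 * psum (fun j => P (2 * a - 1 - 2 * j) N * P (2 * j + 2) N - P (2 * a + 1) N) (a - 1)).
  { intros N; symmetry; apply Sfull_id; auto. }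
  replace (- 2 * lam (2 * a)%nat * ln 2 + 2 * INR a * lam (2 * a + 1)%nat -
     2 * psum (fun j => lam (2 * a - 1 - 2 * j)%nat * lam (2 * j + 2)%nat) (a - 1))
    with (2 * lam (2 * a + 1)%nat + 2 * (- ln 2 * lam (2 * a)%nat)
      - 2 * psum (fun j => lam (2 * a - 1 - 2 * j)%nat * lam (2 * j + 2)%nat - lam (2 * a + 1)%nat) (a - 1)).
  2:{ rewrite psum_minus, psum_const. rewrite minus_INR by lia. simpl INR. ring. }
  apply is_lim_seq_minus'. apply is_lim_seq_plus'.
  - apply is_lim_seq_scal_l with (a := 2) (lu := Finite (lam (2 * a + 1)%nat)). apply lam_lim; lia.
  - apply is_lim_seq_scal_l with (a := 2) (lu := Finite _). apply E_lim; auto.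
  - apply is_lim_seq_scal_l with (a := 2) (lu := Finite _).
    apply psum_lim. intros j hj. apply is_lim_seq_minus'.
    apply is_lim_seq_mult'; apply lam_lim; lia. apply lam_lim; lia.
Qed.
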